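(* Let $X$ be a nontrivial real Banach space. The following assertions are equivalent: (i) $X^*$ has the weak$^*$ diameter $2$ property; (ii) $X$ is weakly octahedral; (iii) for every finite-dimensional subspace $E$ of $X$, every $x^*\in B_{X^*}$, every $\varepsilon>0$, and every $\varepsilon_0\in(0,\varepsilon)$, there is a $y\in S_X$ such that, whenever $|\gamma|\leq 1+\varepsilon_0$, there is a $y^*\in X^*$ satisfying $y^*|_E=x^*|_E$, $y^*(y)=\gamma$, and $\|y^*\|\leq 1+\varepsilon$; (iii') for every finite-dimensional subspace $E$ of $X$, every $x^*\in B_{X^*}$, and every $\varepsilon>0$, there are $y\in S_X$ and $x_1^*,x_2^*\in X^*$ satisfying $x_1^*|_E=x_2^*|_E=x^*|_E$, $x_1^*(y)-x_2^*(y)>2-\varepsilon$, and $\|x_1^*\|,\|x_2^*\|\leq 1+\varepsilon$.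
   Context: $B_Z$, $S_Z$ denote the closed unit ball and unit sphere of a Banach space $Z$. $X^*$ has the weak$^*$ diameter $2$ property if every nonempty relatively weak$^*$ open subset of $B_{X^*}$ has diameter $2$. $X$ is weakly octahedral if for every finite-dimensional subspace $E$ of $X$, every $x^*\in B_{X^*}$, and every $\varepsilon>0$, there is a $y\in S_X$ such that $\|x+y\|\geq(1-\varepsilon)(|x^*(x)|+\|y\|)$ for all $x\in E$. *)

(* Defs.v *)
From HB Require Import structures.
From mathcomp Require Import all_boot all_order all_algebra.
From mathcomp Require Import all_classical all_reals all_analysis.
Set Implicit Arguments. Unset Strict Implicit. Unset Printing Implicit Defensive.
Import Order.TTheory GRing.Theory Num.Theory.
Import numFieldNormedType.Exports.
Local Open Scope classical_set_scope.
Local Open Scope ring_scope.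

Section Banach.
Variables (R : realType) (X : normedModType R).

Definition is_dual (f : X -> R) : Prop :=
  (forall (a : R) (x y : X), f (a *: x + y) = a * f x + f y) /\ continuous f.

Definition dnorm (f : X -> R) : R :=
  sup [set `|f x| | x in [set x : X | `|x| <= 1]].

Definition dual_ball : set (X -> R) := [set f | is_dual f /\ dnorm f <= 1].

Definition weakstar_open (U : set (X -> R)) : Prop :=
  U `<=` is_dual /\
  forall f, U f -> exists (xs : seq X) (e : R), 0 < e /\
    [set g | is_dual g /\ forall x, x \in xs -> `|g x - f x| < e] `<=` U.

Definition ddiam (V : set (X -> R)) : R :=
  sup [set dnorm (f \- g) | f in V & g in V].

Definition weakstar_diam2 : Prop :=
  forall U, weakstar_open U -> (U `&` dual_ball) !=set0 ->
    ddiam (U `&` dual_ball) = 2.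

Definition span (xs : seq X) : set X :=
  [set x | exists c : nat -> R, x = \sum_(i < size xs) c i *: xs`_i].

Definition fin_dim_subspace (E : set X) : Prop := exists xs : seq X, E = span xs.

Definition weakly_octahedral : Prop :=
  forall E, fin_dim_subspace E -> forall xs, dual_ball xs ->
  forall eps : R, 0 < eps -> exists y : X, `|y| = 1 /\
    forall x, E x -> `|x + y| >= (1 - eps) * (`|xs x| + `|y|).

Definition cond_iii : Prop :=
  forall E, fin_dim_subspace E -> forall xs, dual_ball xs ->
  forall eps : R, 0 < eps -> forall eps0 : R, 0 < eps0 -> eps0 < eps ->
  exists y : X, `|y| = 1 /\
    forall gamma : R, `|gamma| <= 1 + eps0 ->
      exists ys : X -> R, is_dual ys /\ (forall x, E x -> ys x = xs x) /\
        ys y = gamma /\ dnorm ys <= 1 + eps.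

Definition cond_iii' : Prop :=
  forall E, fin_dim_subspace E -> forall xs, dual_ball xs ->
  forall eps : R, 0 < eps ->
  exists (y : X) (x1 x2 : X -> R), `|y| = 1 /\
    is_dual x1 /\ is_dual x2 /\
    (forall x, E x -> x1 x = xs x) /\ (forall x, E x -> x2 x = xs x) /\
    x1 y - x2 y > 2 - eps /\ dnorm x1 <= 1 + eps /\ dnorm x2 <= 1 + eps.

End Banach.

(* Main.v *)
Require Import Defs.
From HB Require Import structures.
From mathcomp Require Import all_boot all_order all_algebra.
From mathcomp Require Import all_classical all_reals all_analysis.
From mathcomp Require Import ring lra.
Import Order.TTheory GRing.Theory Num.Theory.
Import numFieldNormedType.Exports.
Local Open Scope ring_scope.

Module Helpers.
Set Implicit Arguments. Unset Strict Implicit. Unset Printing Implicit Defensive.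
Local Open Scope classical_set_scope.
Local Notation dspan := (@Defs.span _ _).

Section Basics.
Variables (R : realType) (X : normedModType R).

Definition islin (f : X -> R) := forall (a : R) (x y : X), f (a *: x + y) = a * f x + f y.

Lemma lin0 f : islin f -> f 0 = 0.
Proof. move=> h; have := h 1 0 0; rewrite scaler0 addr0 mul1r => e.
by apply: (addrI (f 0)); rewrite addr0 -e. Qed.
Lemma linD f : islin f -> forall x y, f (x + y) = f x + f y.
Proof. by move=> h x y; rewrite -[x]scale1r h mul1r scale1r. Qed.
Lemma linZ f : islin f -> forall a x, f (a *: x) = a * f x.
Proof. by move=> h a x; rewrite -[a *: x]addr0 h lin0 // addr0. Qed.
Lemma linN f : islin f -> forall x, f (- x) = - f x.
Proof. by move=> h x; rewrite -scaleN1r linZ // mulN1r. Qed.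
Lemma linB f : islin f -> forall x y, f (x - y) = f x - f y.
Proof. by move=> h x y; rewrite linD // linN. Qed.

Lemma bound_cont f c : islin f -> (forall x, `|f x| <= c * `|x|) -> continuous f.
Proof.
move=> hl hb x; apply/cvgrPdist_lt => e e0.
have c1 : 0 < `|c| + 1 by rewrite ltr_wpDl.
near=> z. rewrite -linB //.
apply: (le_lt_trans (hb _)).
apply: (le_lt_trans (y := (`|c| + 1) * `|x - z|)).
  apply: ler_wpM2r => //; rewrite (le_trans (ler_norm _)) // lerDl //.
rewrite -ltr_pdivlMl //.
near: z; apply: cvgr_dist_lt => //; rewrite mulrC divr_gt0 //.
Unshelve. all: by end_near. Qed.

End Basics.


Section Dual.
Variables (R : realType) (X : normedModType R).

Lemma dual_lin (f : X -> R) : is_dual f -> islin f.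
Proof. by case. Qed.

Lemma dual_bdd (f : X -> R) : is_dual f -> exists c, 0 < c /\ forall x, `|f x| <= c * `|x|.
Proof.
move=> [hl hc].
have := hc 0 => /cvgrPdist_lt/(_ 1 ltr01) /nbhs_ballP [d /= d0 H].
exists (2 / d); split; first by rewrite divr_gt0.
move=> x; have [->|x0] := eqVneq x 0; first by rewrite lin0 // !normr0 mulr0.
have nx : 0 < `|x| by rewrite normr_gt0.
pose z := (d / (2 * `|x|)) *: x.
have zb : ball 0 d z.
  rewrite -ball_normE /ball_ /= sub0r normrN /z normrZ ger0_norm; last first.
    by rewrite divr_ge0 // ?mulr_ge0 // ltW.
  have -> : d / (2 * `|x|) * `|x| = d / 2 by field; rewrite gt_eqF.
  lra.
have := H _ zb; rewrite lin0 // sub0r normrN /z linZ // normrM ger0_norm; last first.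
  by rewrite divr_ge0 // ?mulr_ge0 // ltW.
rewrite mulrAC ltr_pdivrMr ?mulr_gt0 // mul1r => hh.
have -> : 2 / d * `|x| = (2 * `|x|) / d by field; rewrite gt_eqF.
rewrite ler_pdivlMr //; rewrite mulrC; exact: ltW.
Qed.

Lemma dual_of_bound (f : X -> R) c : islin f -> (forall x, `|f x| <= c * `|x|) -> is_dual f.
Proof. by move=> hl hb; split => //; exact: bound_cont hb. Qed.

Lemma dnorm_has_ub (f : X -> R) : is_dual f ->
  has_ubound [set `|f x| | x in [set x : X | `|x| <= 1]].
Proof.
move=> /dual_bdd [c [c0 hc]]; exists c => _ [x /= x1 <-].
by apply: (le_trans (hc x)); rewrite ler_piMr // ltW.
Qed.

Lemma dnorm_ub (f : X -> R) x : is_dual f -> `|x| <= 1 -> `|f x| <= dnorm f.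
Proof. by move=> hd x1; apply: ub_le_sup; [exact: dnorm_has_ub|exists x]. Qed.

Lemma dnorm_ge0 (f : X -> R) : is_dual f -> 0 <= dnorm f.
Proof.
move=> hd; apply: le_trans (dnorm_ub (x := 0) hd _); rewrite ?normr0 //.
Qed.

Lemma dnorm_le (f : X -> R) x : is_dual f -> `|f x| <= dnorm f * `|x|.
Proof.
move=> hd; have [->|x0] := eqVneq x 0.
  by rewrite lin0 ?normr0 ?mulr0 //; case: hd.
have nx : 0 < `|x| by rewrite normr_gt0.
have := dnorm_ub (x := `|x|^-1 *: x) hd.
rewrite normrZ normfV normr_id mulVf ?gt_eqF // => /(_ (lexx _)).
rewrite linZ; last by case: hd.
rewrite normrM normfV normr_id => h.
have -> : `|f x| = (`|x|^-1 * `|f x|) * `|x| by field; rewrite gt_eqF.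
by apply: ler_wpM2r.
Qed.

Lemma dnorm_leP (f : X -> R) c : 0 <= c -> islin f -> (forall x, `|f x| <= c * `|x|) -> dnorm f <= c.
Proof.
move=> c0 hl hb; apply: ge_sup; first by exists `|f 0|, 0 => //=; rewrite normr0.
move=> _ [x /= x1 <-].
by apply: (le_trans (hb x)); rewrite ler_piMr.
Qed.

Lemma dnorm_gt (f : X -> R) r : r < dnorm f -> exists x, `|x| <= 1 /\ r < `|f x|.
Proof.
move=> /sup_gt []; first by exists `|f 0|, 0 => //=; rewrite normr0.
by move=> _ [x /= x1 <-] h; exists x.
Qed.

Lemma dual_comb (f g : X -> R) a b : is_dual f -> is_dual g ->
  is_dual (fun x => a * f x + b * g x).
Proof.
move=> hf hg; have lf := dual_lin hf; have lg := dual_lin hg.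
apply: (@dual_of_bound _ (`|a| * dnorm f + `|b| * dnorm g)).
  move=> c x y; rewrite !(linD lf, linD lg, linZ lf, linZ lg); ring.
move=> x; apply: (le_trans (ler_normD _ _)); rewrite mulrDl !normrM -!mulrA.
by apply: lerD; apply: ler_wpM2l => //; exact: dnorm_le.
Qed.

End Dual.


Section HBsec.
Variables (R : realType) (X : normedModType R) (c : R).
Hypothesis c0 : 0 <= c.

Definition good (G : set (X * R)) :=
  [/\ G (0, 0),
   (forall a x s y u, G (x, s) -> G (y, u) -> G (a *: x + y, a * s + u)) &
   (forall x s, G (x, s) -> s <= c * `|x|)].

Lemma good_fun G : good G -> forall x s t, G (x, s) -> G (x, t) -> s = t.
Proof.
case=> _ hl hd x s t hs ht.
have h1 := hd _ _ (hl (-1) _ _ _ _ ht hs).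
have h2 := hd _ _ (hl (-1) _ _ _ _ hs ht).
move: h1 h2; rewrite scaleN1r addNr normr0 mulr0; lra.
Qed.

Lemma norm_scale_aux (r : R) (x w : X) : 0 < r -> r * `|r^-1 *: x + w| = `|x + r *: w|.
Proof.
move=> r0; rewrite -{1}(gtr0_norm r0) -normrZ scalerDr scalerA mulfV ?gt_eqF //.
by rewrite scale1r.
Qed.

Lemma good_ext G z : good G -> (forall s, ~ G (z, s)) ->
  exists B, good B /\ G `<` B.
Proof.
move=> gG nz; have [g0 hl hd] := gG.
pose L := [set p.2 - c * `|p.1 - z| | p in G].
have Lne : L !=set0 by exists ((0 : X, 0 : R).2 - c * `|(0:X) - z|), (0, 0).
have Lub : forall x s, G (x, s) -> ubound L (c * `|x + z| - s).
  move=> x s hxs _ [[y u] /= hyu <-].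
  have := hd _ _ (hl 1 _ _ _ _ hxs hyu); rewrite scale1r mul1r => h.
  have : `|x + y| <= `|x + z| + `|y - z|.
    by apply: le_trans (ler_normD _ _); rewrite addrACA subrr addr0.
  move=> /(ler_wpM2l c0); rewrite mulrDr; lra.
pose al := sup L.
have alL : forall y u, G (y, u) -> u - c * `|y - z| <= al.
  move=> y u h; apply: ub_le_sup; last by exists (y, u).
  by exists (c * `|0 + z| - 0); apply: Lub.
have alU : forall x s, G (x, s) -> al <= c * `|x + z| - s.
  by move=> x s h; apply: ge_sup => //; exact: Lub.
pose B := [set q : X * R | exists x s t, G (x, s) /\ q = (x + t *: z, s + t * al)].
exists B; split; last first.
  split; first by move=> [x s] h; exists x, s, 0; rewrite scale0r mul0r !addr0.
  move=> BG; apply: (nz al); apply: BG.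
  by exists 0, 0, 1; split => //; rewrite scale1r mul1r !add0r.
split.
- by exists 0, 0, 0; rewrite scale0r mul0r !addr0.
- move=> a _ _ _ _ [x1 [s1 [t1 [h1 [-> ->]]]]] [x2 [s2 [t2 [h2 [-> ->]]]]].
  exists (a *: x1 + x2), (a * s1 + s2), (a * t1 + t2); split; first exact: hl.
  congr (_, _); last by ring.
  by rewrite scalerDr !scalerA scalerDl addrACA.
- move=> _ _ [x [s [t [h [-> ->]]]]].
  have [t0|t0|->] := ltgtP t 0; last by rewrite scale0r mul0r !addr0; exact: hd.
  + have r0 : 0 < - t by rewrite oppr_gt0.
    have := alL _ _ (hl (- t)^-1 _ _ _ _ h g0); rewrite !addr0 => h1.
    have := ler_wpM2l (ltW r0) h1; rewrite mulrBr mulrA mulfV ?gt_eqF // mul1r.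
    rewrite mulrCA norm_scale_aux // scaleNr scalerN opprK; lra.
  + have := alU _ _ (hl t^-1 _ _ _ _ h g0); rewrite !addr0 => h1.
    have := ler_wpM2l (ltW t0) h1; rewrite mulrBr (mulrA t t^-1) mulfV ?gt_eqF // mul1r.
    rewrite mulrCA norm_scale_aux //; lra.
Qed.

Lemma hahn_banach (G0 : set (X * R)) : good G0 ->
  exists f : X -> R, islin f /\ (forall x s, G0 (x, s) -> f x = s) /\
    forall x, f x <= c * `|x|.
Proof.
move=> g0.
pose P := fun G : set (X * R) => G = set0 \/ (good G /\ G0 `<=` G).
have [A [PA Amax]] : exists A, P A /\ forall B, A `<` B -> ~ P B.
  apply: Zorn_bigcup => F FP Ftot.
  have [allz|] := pselect (forall G, F G -> G = set0).
    left; apply/seteqP; split => [p [G FG]|//]; by rewrite (allz G FG).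
  move=> /(iffRL (existsNP _)) [G1 /not_implyP [FG1 G1n]].
  have gG1 : good G1 /\ G0 `<=` G1 by case: (FP _ FG1).
  have goodF : forall G p, F G -> G p -> good G.
    by move=> G p FG Gp; case: (FP _ FG) => [Gz|[]//]; move: Gp; rewrite Gz.
  right; split; last by move=> p hp; exists G1 => //; apply: gG1.2.
  split.
  - by exists G1 => //; case: gG1.1.
  - move=> a x s y u [H1 FH1 h1] [H2 FH2 h2].
    have [H12|H21] := Ftot _ _ FH1 FH2.
    + exists H2 => //; case: (goodF _ _ FH2 h2) => _ hl _; apply: hl => //; exact: H12.
    + exists H1 => //; case: (goodF _ _ FH1 h1) => _ hl _; apply: hl => //; exact: H21.
  - by move=> x s [H FH h]; case: (goodF _ _ FH h) => _ _ hd; exact: hd.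
have [Az|[gA A0]] := PA.
  exfalso; apply: (Amax G0); last by right; split.
  rewrite Az; split => [p []|h]; case: g0 => g00 _ _; exact: (h _ g00).
have tot : forall z, exists s, A (z, s).
  move=> z; apply: contrapT => /(iffRL (forallNP _)) nz.
  have [B [gB AB]] := good_ext gA nz.
  apply: (Amax B AB); right; split => //; apply: subset_trans A0 _; exact: AB.1.
pose f := fun z => proj1_sig (cid (tot z)).
have fA : forall z, A (z, f z) by move=> z; exact: (proj2_sig (cid (tot z))).
have [_ hl hd] := gA.
exists f; split; [|split].
- by move=> a x y; apply: (good_fun gA (fA _)); apply: hl.
- by move=> x s h; apply: (good_fun gA (fA _)); exact: A0.
- by move=> x; exact: hd.
Qed.
End HBsec.

Section HBdual.
Variables (R : realType) (X : normedModType R).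

Lemma hb_dual (c : R) (G0 : set (X * R)) : 0 <= c -> good c G0 ->
  exists f : X -> R, is_dual f /\ (forall x s, G0 (x, s) -> f x = s) /\ dnorm f <= c.
Proof.
move=> c0 g0; have [f [hl [hx hb]]] := hahn_banach c0 g0.
have hb' : forall x, `|f x| <= c * `|x|.
  move=> x; rewrite ler_norml hb andbT lerNl -linN // -(normrN x); exact: hb.
exists f; split; first exact: dual_of_bound hb'.
by split => //; exact: dnorm_leP.
Qed.
End HBdual.


Section Span.
Variables (R : realType) (X : normedModType R).

Lemma span_nil (x : X) : dspan [::] x <-> x = 0.
Proof. by split => [[c ->]|->]; [rewrite big_ord0|exists (fun=> 0); rewrite big_ord0]. Qed.

Lemma span_cons (z : X) zs x : dspan (z :: zs) x <-> exists a w, dspan zs w /\ x = a *: z + w.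
Proof.
split => [[c ->]|[a [w [[c ->] ->]]]].
  by exists (c 0%N), (\sum_(i < size zs) c i.+1 *: zs`_i); split;
    [exists (fun i => c i.+1)|rewrite big_ord_recl].
exists (fun i => if i is j.+1 then c j else a).
by rewrite /= big_ord_recl.
Qed.

Lemma span_lin zs : dspan zs (0 : X) /\
  forall a x y, dspan zs x -> dspan zs y -> dspan zs (a *: x + y).
Proof.
elim: zs => [|z zs [IH0 IH]].
  by split; [apply/span_nil|move=> a x y /span_nil -> /span_nil ->; apply/span_nil;
    rewrite scaler0 addr0].
split; first by apply/span_cons; exists 0, 0; rewrite scale0r addr0.
move=> a x y /span_cons [a1 [w1 [h1 ->]]] /span_cons [a2 [w2 [h2 ->]]].
apply/span_cons; exists (a * a1 + a2), (a *: w1 + w2); split; first exact: IH.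
by rewrite scalerDr scalerA scalerDl addrACA.
Qed.

Lemma span0 zs : dspan zs (0 : X). Proof. by case: (span_lin zs). Qed.
Lemma spanL zs a (x y : X) : dspan zs x -> dspan zs y -> dspan zs (a *: x + y).
Proof. by case: (span_lin zs) => _; apply. Qed.
Lemma spanZ zs a (x : X) : dspan zs x -> dspan zs (a *: x).
Proof. by move=> h; rewrite -[_ *: _]addr0; apply: spanL => //; exact: span0. Qed.
Lemma spanD zs (x y : X) : dspan zs x -> dspan zs y -> dspan zs (x + y).
Proof. by move=> h1 h2; rewrite -[x]scale1r; apply: spanL. Qed.
Lemma spanN zs (x : X) : dspan zs x -> dspan zs (- x).
Proof. by move=> h; rewrite -scaleN1r; exact: spanZ. Qed.
Lemma spanB zs (x y : X) : dspan zs x -> dspan zs y -> dspan zs (x - y).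
Proof. by move=> h1 h2; apply: spanD => //; exact: spanN. Qed.

Lemma span_mem zs (x : X) : x \in zs -> dspan zs x.
Proof.
elim: zs => [//|z zs IH]; rewrite inE => /orP[/eqP ->|h]; apply/span_cons.
  by exists 1, 0; split; [exact: span0|rewrite scale1r addr0].
by exists 0, x; split; [exact: IH|rewrite scale0r add0r].
Qed.

End Span.


Section Repr.
Variables (R : realType) (X : normedModType R).

Definition Pr n (e : nat -> X) (f : nat -> X -> R) (v : X) := \sum_(i < n) f i v *: e i.

Lemma Pr_L n e f : (forall i, is_dual (f i)) -> forall a x y,
  Pr n e f (a *: x + y) = a *: Pr n e f x + Pr n e f y.
Proof.
move=> hf a x y; rewrite /Pr scaler_sumr -big_split; apply: eq_bigr => i _.
by rewrite (dual_lin (hf i)) scalerDl scalerA.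
Qed.

Lemma Pr_B n e f : (forall i, is_dual (f i)) -> forall x y,
  Pr n e f (x - y) = Pr n e f x - Pr n e f y.
Proof.
move=> hf x y; rewrite /Pr -sumrB; apply: eq_bigr => i _.
by rewrite (linB (dual_lin (hf i))) scalerBl.
Qed.

Lemma Pr_bound n e f : (forall i, is_dual (f i)) -> forall v,
  `|Pr n e f v| <= (\sum_(i < n) dnorm (f i) * `|e i|) * `|v|.
Proof.
move=> hf v; rewrite /Pr mulr_suml; apply: le_trans (ler_norm_sum _ _ _) _.
apply: ler_sum => i _; rewrite normrZ mulrAC ler_wpM2r //; exact: dnorm_le.
Qed.

Lemma Pr_sum_ge0 n (e : nat -> X) (f : nat -> X -> R) : (forall i, is_dual (f i)) -> 0 <= \sum_(i < n) dnorm (f i) * `|e i|.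
Proof. by move=> hf; apply: sumr_ge0 => i _; rewrite mulr_ge0 //; exact: dnorm_ge0. Qed.

Lemma repr (zs : seq X) : exists n (e : nat -> X) (f : nat -> X -> R),
  [/\ forall i, is_dual (f i), forall i, (i < n)%N -> dspan zs (e i) &
      forall x, dspan zs x -> x = Pr n e f x].
Proof.
elim: zs => [|z zs [n [e [f [hf he hx]]]]].
  exists 0%N, (fun=> 0), (fun _ _ => 0); split => //.
  - by move=> i; apply: (@dual_of_bound _ _ _ 0) => [a x y|x]; rewrite ?mulr0 ?addr0 ?normr0 ?mul0r.
  - by move=> x /span_nil ->; rewrite /Pr big_ord0.
pose P := Pr n e f.
have PE : forall v, dspan zs (P v).
  move=> v; rewrite /P /Pr; elim/big_ind: _ => //; first exact: span0.
    by move=> ? ? ? ?; exact: spanD.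
  by move=> i _; apply: spanZ; exact: he.
pose z' := z - P z.
have Pz' : P z' = 0 by rewrite /z' /P Pr_B // -(hx _ (PE z)) subrr.
have z'E : dspan (z :: zs) z'.
  by apply/span_cons; exists 1, (- P z); split; [exact/spanN|rewrite scale1r].
have [z0|z0] := eqVneq z' 0.
  have zE : dspan zs z by move/eqP: z0; rewrite /z' subr_eq0 => /eqP ->.
  exists n, e, f; split => //.
    by move=> i hi; apply/span_cons; exists 0, (e i); rewrite scale0r add0r; split=> //; exact: he.
  move=> x /span_cons [a [w [hw ->]]]; apply: hx; apply: spanL => //.
pose C := \sum_(i < n) dnorm (f i) * `|e i|.
have C0 : 0 <= C by exact: Pr_sum_ge0.
have nz' : 0 < `|z'| by rewrite normr_gt0.
have [d [d0 hd]] : exists d, 0 < d /\ forall w, dspan zs w -> d <= `|z' - w|.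
  apply: contrapT => /(iffRL (forallNP _)) H.
  have dd0 : 0 < `|z'| / (1 + C) by rewrite divr_gt0 // ltr_wpDr.
  apply: (H (`|z'| / (1 + C))); split => // w hw; rewrite leNgt; apply/negP => hlt.
  have Pw : P (z' - w) = - w by rewrite /P Pr_B // -(hx _ hw) -/P Pz' sub0r.
  have := Pr_bound n e hf (z' - w); rewrite -/P -/C Pw normrN => hw1.
  have : `|z'| <= `|z' - w| + `|w|.
    by apply: le_trans (ler_normD _ _); rewrite subrK.
  have h3 : (1 + C) * `|z' - w| < (1 + C) * (`|z'| / (1 + C)).
    by rewrite ltr_pM2l // ltr_wpDr.
  have e1 : (1 + C) * (`|z'| / (1 + C)) = `|z'| by field; rewrite gt_eqF // ltr_wpDr.
  move: h3; rewrite e1 mulrDl mul1r; lra.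
pose G0 := [set q : X * R | exists w t, dspan zs w /\ q = (w + t *: z', t)].
have gG0 : good d^-1 G0.
  split.
  - by exists 0, 0; split; [exact: span0|rewrite scale0r addr0].
  - move=> a _ _ _ _ [w1 [t1 [h1 [-> ->]]]] [w2 [t2 [h2 [-> ->]]]].
    exists (a *: w1 + w2), (a * t1 + t2); split; first exact: spanL.
    by congr (_, _); rewrite scalerDr !scalerA scalerDl addrACA.
  - move=> _ _ [w [t [hw [-> ->]]]].
    have [->|t0] := eqVneq t 0; first by rewrite mulr_ge0 // invr_ge0 ltW.
    have nt : 0 < `|t| by rewrite normr_gt0.
    have := hd _ (spanN (spanZ (t^-1) hw)).
    rewrite opprK => h1.
    have e2 : `|w + t *: z'| = `|t| * `|z' + t^-1 *: w|.
      by rewrite -normrZ (scalerDr t z') scalerA mulfV // scale1r addrC.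
    rewrite e2 ler_pdivlMl // (mulrC d); apply: le_trans (ler_wpM2l (ltW nt) h1).
    by rewrite ler_pM2r // ler_norm.
have di : 0 <= d^-1 by rewrite invr_ge0 ltW.
have [g [hg [hgx hgn]]] := hb_dual di gG0.
have gE : forall w t, dspan zs w -> g (w + t *: z') = t.
  by move=> w t hw; apply: hgx; exists w, t.
pose e' i := if (i < n)%N then e i else z'.
pose f' i := if (i < n)%N then (fun x => 1 * f i x + (- f i z') * g x) else g.
exists n.+1, e', f'; split.
- by move=> i; rewrite /f'; case: ifP => _ //; exact: dual_comb.
- move=> i _; rewrite /e'; case: ifP => hi //.
  by apply/span_cons; exists 0, (e i); rewrite scale0r add0r; split=> //; exact: he.
- move=> x /span_cons [a [w [hw ->]]].
  have ex : a *: z + w = (a *: P z + w) + a *: z'.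
    by rewrite /z' scalerBr [RHS]addrCA [X in _ = _ + X]addrAC subrr add0r.
  have vE : dspan zs (a *: P z + w) by apply: spanL.
  have gx : g (a *: z + w) = a by rewrite ex gE.
  rewrite /Pr big_ord_recr /= /e' /f' ltnn.
  under eq_bigr => i _ do rewrite ltn_ord.
  rewrite gx; rewrite {1}ex; congr (_ + _).
  rewrite (hx _ vE) /Pr; apply: eq_bigr => i _; congr (_ *: _).
  rewrite ex (linD (dual_lin (hf i)) (a *: P z + w) (a *: z')) (linZ (dual_lin (hf i)) a z'); ring.
Qed.
End Repr.


Section Dirs.
Variables (R : realType) (X : normedModType R).

Lemma dual_sub (f g : X -> R) : is_dual f -> is_dual g -> is_dual (f \- g).
Proof.
move=> hf hg; have lf := dual_lin hf; have lg := dual_lin hg.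
apply: (@dual_of_bound _ _ _ (dnorm f + dnorm g)).
  move=> a x y /=; rewrite (linD lf) (linD lg) (linZ lf) (linZ lg); ring.
move=> x /=; apply: le_trans (ler_normB _ _) _; rewrite mulrDl.
by apply: lerD; exact: dnorm_le.
Qed.

Lemma dual_scale (f : X -> R) a : is_dual f -> is_dual (fun x => a * f x).
Proof.
move=> hf; have lf := dual_lin hf.
apply: (@dual_of_bound _ _ _ (`|a| * dnorm f)).
  move=> b x y /=; rewrite (linD lf) (linZ lf); ring.
by move=> x /=; rewrite normrM -mulrA ler_wpM2l //; exact: dnorm_le.
Qed.

Lemma dnorm_sub_le (f g : X -> R) : dual_ball f -> dual_ball g -> dnorm (f \- g) <= 2.
Proof.
move=> [hf nf] [hg ng]; have [hl _] := dual_sub hf hg.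
apply: dnorm_leP => // x /=; apply: le_trans (ler_normB _ _) _.
have := dnorm_le x hf; have := dnorm_le x hg.
have := normr_ge0 x => h0.
move=> h1 h2; have := ler_wpM2r h0 nf; have := ler_wpM2r h0 ng; lra.
Qed.

Lemma iii_iii' : cond_iii X -> cond_iii' X.
Proof.
move=> h E hE xs hxs eps e0.
have [y [ny H]] := h E hE xs hxs eps e0 (eps / 2) ltac:(lra) ltac:(lra).
have [x1 [d1 [E1 [y1 n1]]]] := H 1 ltac:(rewrite normr1; lra).
have [x2 [d2 [E2 [y2 n2]]]] := H (-1) ltac:(rewrite normrN normr1; lra).
exists y, x1, x2; do 6!split => //; rewrite y1 y2; lra.
Qed.


Lemma mem_le_sum (xs : seq X) x : x \in xs -> `|x| <= \sum_(y <- xs) `|y|.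
Proof.
elim: xs => [//|z zs IH]; rewrite inE big_cons => /orP[/eqP ->|h].
  by rewrite lerDl sumr_ge0.
by apply: le_trans (IH h) _; rewrite lerDr.
Qed.

Lemma sup_eq2 (S : set R) : S !=set0 -> (forall s, S s -> s <= 2) ->
  (forall d, 0 < d -> exists s, S s /\ 2 - d < s) -> sup S = 2.
Proof.
move=> Sn Sub Sd; apply/eqP; rewrite eq_le; apply/andP; split.
  by apply: ge_sup.
rewrite leNgt; apply/negP => hlt.
have [s [Ss hs]] := Sd (2 - sup S) ltac:(rewrite subr_gt0 //).
have : s <= sup S by apply: ub_le_sup => //; exists 2.
lra.
Qed.

Lemma iii'_i : cond_iii' X -> weakstar_diam2 X.
Proof.
move=> h U [Usub Uop] [f [Uf Bf]].
apply: sup_eq2.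
- by exists (dnorm (f \- f)), f => //; exists f.
- by move=> _ [g [_ Bg] [g' [_ Bg'] <-]]; exact: dnorm_sub_le.
move=> del del0.
have [xs [e [e0 hU]]] := Uop f Uf.
pose M := 1 + \sum_(y <- xs) `|y|.
have M1 : 1 <= M by rewrite /M lerDl sumr_ge0.
pose eta := Num.min (del / 3) (e / (2 * M)).
have eta0 : 0 < eta by rewrite lt_min divr_gt0 // ?divr_gt0 // mulr_gt0 // (lt_le_trans ltr01).
have etad : eta <= del / 3 by rewrite ge_min lexx.
have etae : eta * M < e.
  have : eta <= e / (2 * M) by rewrite ge_min lexx orbT.
  move=> /(ler_wpM2r (le_trans ler01 M1)).
  have -> : e / (2 * M) * M = e / 2 by field; rewrite gt_eqF // (lt_le_trans ltr01).
  lra.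
have [y [x1 [x2 [ny [d1 [d2 [E1 [E2 [hy [n1 n2]]]]]]]]]] :=
  h (dspan xs) (ex_intro _ xs erefl) f Bf eta eta0.
have [hf nf] := Bf.
pose k := (1 + eta)^-1.
have k0 : 0 < k by rewrite invr_gt0; lra.
have kk : k * (1 + eta) = 1 by rewrite mulVf //; apply/eqP; lra.
have ek : eta * k = 1 - k by rewrite -kk; ring.
have kle1 : k <= 1 by have := mulr_gt0 eta0 k0; lra.
pose g1 := fun x => k * x1 x.
pose g2 := fun x => k * x2 x.
have gin : forall xi : X -> R, is_dual xi -> dnorm xi <= 1 + eta ->
    (forall x, dspan xs x -> xi x = f x) ->
    (U `&` @dual_ball _ X) (fun x => k * xi x).
  move=> xi dxi nxi Exi.
  have dk := dual_scale k dxi.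
  split.
    apply: hU; split => // x xin.
    rewrite (Exi _ (span_mem xin)).
    have -> : k * f x - f x = - (eta * k) * f x.
      by rewrite ek; ring.
    rewrite normrM normrN normrM (gtr0_norm eta0) (gtr0_norm k0).
    have hfx : `|f x| <= `|x| by have := dnorm_le x hf; have := ler_wpM2r (normr_ge0 x) nf; lra.
    have hx : `|x| <= M by rewrite /M; have := mem_le_sum xin; lra.
    apply: le_lt_trans etae.
    rewrite -mulrA ler_wpM2l //; first exact: ltW.
    apply: le_trans (le_trans hfx hx).
    by apply: ler_piMl => //; exact: ltW.
  split => //; apply: dnorm_leP => //; first by case: dk.
  move=> x; rewrite normrM gtr0_norm // -kk -mulrA ler_wpM2l //; first exact: ltW.
  by apply: le_trans (dnorm_le x dxi) _; rewrite ler_wpM2r.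
exists (dnorm (g1 \- g2)); split.
  by exists g1; [exact: gin|exists g2; [exact: gin|]].
have dg := dual_sub (dual_scale k d1) (dual_scale k d2).
have h1 : `|(g1 \- g2) y| <= dnorm (g1 \- g2) by apply: dnorm_ub dg _; rewrite ny.
have hp : k * (2 - eta) < k * (x1 y - x2 y) by rewrite ltr_pM2l.
have h2 := ler_wpM2l (ltW eta0) kle1.
have h3 : k * (x1 y - x2 y) <= `|(g1 \- g2) y| by rewrite /= /g1 /g2 -mulrBr ler_norm.
move: hp h2; rewrite mulrBr mulr1; lra.
Qed.

End Dirs.


Section Dirs2.
Variables (R : realType) (X : normedModType R).

Lemma ii_iii : weakly_octahedral X -> cond_iii X.
Proof.
move=> h E [zs ->] xs hxs eps e0 eps0 p0 pe.
pose ep := (eps - eps0) / (1 + eps).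
have ep0 : 0 < ep by rewrite divr_gt0; lra.
have epe : (1 + eps) * (1 - ep) = 1 + eps0 by rewrite /ep; field; apply/eqP; lra.
have ep1 : ep < 1.
  rewrite /ep ltr_pdivrMr; lra.
have [y [ny H]] := h _ (ex_intro _ zs erefl) xs hxs ep ep0.
have [hx nx] := hxs; have lx := dual_lin hx.
have hfx : forall w, `|xs w| <= `|w|.
  by move=> w; have := dnorm_le w hx; have := ler_wpM2r (normr_ge0 w) nx; lra.
have key : forall w t, dspan zs w -> (1 - ep) * (`|xs w| + `|t|) <= `|w + t *: y|.
  move=> w t hw; have [->|t0] := eqVneq t 0.
    rewrite normr0 addr0 scale0r addr0; apply: le_trans (hfx w).
    by rewrite ler_piMl // ?normr_ge0 //; lra.
  have nt : 0 < `|t| by rewrite normr_gt0.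
  have := H _ (spanZ (t^-1) hw); rewrite ny (linZ lx) normrM normfV => H1.
  have e2 : `|w + t *: y| = `|t| * `|t^-1 *: w + y|.
    by rewrite -normrZ scalerDr scalerA mulfV // scale1r addrC.
  rewrite e2; apply: le_trans (ler_wpM2l (ltW nt) H1).
  have -> : `|t| * ((1 - ep) * (`|t|^-1 * `|xs w| + 1)) = (1 - ep) * (`|xs w| + `|t|).
    by field; rewrite gt_eqF.
  by [].

exists y; split => // gam hgam.
pose G0 := [set q : X * R | exists w t, dspan zs w /\ q = (w + t *: y, xs w + gam * t)].
have gG0 : good (1 + eps) G0.
  split.
  - by exists 0, 0; split; [exact: span0|rewrite scale0r addr0 (lin0 lx) mulr0 addr0].
  - move=> a _ _ _ _ [w1 [t1 [h1 [-> ->]]]] [w2 [t2 [h2 [-> ->]]]].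
    exists (a *: w1 + w2), (a * t1 + t2); split; first exact: spanL.
    congr (_, _).
      by rewrite scalerDr !scalerA scalerDl addrACA.
    by rewrite (linD lx) (linZ lx); ring.
  - move=> _ _ [w [t [hw [-> ->]]]].
    have k := key w t hw.
    have pe1 : 0 <= 1 + eps by lra.
    have k2 := ler_wpM2l pe1 k.
    rewrite mulrA epe in k2; apply: le_trans k2 => //.
    have g1 : gam * t <= (1 + eps0) * `|t|.
      apply: le_trans (ler_norm _) _; rewrite normrM ler_wpM2r //.
    have g2 : xs w <= `|xs w| by exact: ler_norm.
    have g3 : 0 <= `|xs w| by [].
    have := ler_wpM2r g3 (_ : 1 <= 1 + eps0); last by lra.
have pe1 : 0 <= 1 + eps by lra.
have [ys [hys [hyx hyn]]] := hb_dual pe1 gG0.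
exists ys; split => //; split; [|split] => //.
- move=> x hxE; apply: hyx; exists x, 0; split => //.
  by rewrite scale0r addr0 mulr0 addr0.
- apply: hyx; exists 0, 1; split; first exact: span0.
  by rewrite scale1r add0r (lin0 lx) mulr1 add0r.
Qed.

End Dirs2.


Section Dirs3.
Variables (R : realType) (X : normedModType R).

Lemma lin_sum (phi : X -> R) n (F : nat -> X) : islin phi ->
  phi (\sum_(i < n) F i) = \sum_(i < n) phi (F i).
Proof.
move=> hl; elim: n => [|n IH]; first by rewrite !big_ord0 lin0.
by rewrite !big_ord_recr /= (linD hl) IH.
Qed.

Lemma finite_margin (s : seq X) (a : X -> R) (d : R) :
  (forall x, x \in s -> a x < d) -> exists r, 0 < r /\ forall x, x \in s -> a x + r <= d.
Proof.
elim: s => [|z s IH] h; first by exists 1; split.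
have [r [r0 hr]] : exists r, 0 < r /\ forall x, x \in s -> a x + r <= d.
  by apply: IH => x hx; apply: h; rewrite inE hx orbT.
have hz := h z (mem_head _ _).
exists (Num.min r (d - a z)); split; first by rewrite lt_min r0 subr_gt0.
move=> x; rewrite inE => /orP[/eqP ->|hx].
  by rewrite -lerBrDl ge_min lexx orbT.
by apply: le_trans (hr _ hx); rewrite lerD2l ge_min lexx.
Qed.


Lemma approx_bound n (e : nat -> X) (f : nat -> X -> R) (g xs : X -> R) (del : R) x :
  (forall i, is_dual (f i)) -> is_dual g -> is_dual xs -> 0 <= del ->
  (forall i, (i < n)%N -> `|g (e i) - xs (e i)| < del) ->
  x = Pr n e f x ->
  `|g x - xs x| <= del * (\sum_(i < n) dnorm (f i)) * `|x|.
Proof.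
move=> hf hg hxs d0 hd ex.
have [hl _] := dual_sub hg hxs.
have -> : g x - xs x = (g \- xs) x by [].
rewrite {1}ex /Pr (lin_sum n (fun j => f j x *: e j) hl) -mulrA mulr_suml mulr_sumr.
apply: le_trans (ler_norm_sum _ _ _) _; apply: ler_sum => i _.
rewrite (linZ hl) normrM /= mulrC.
apply: ler_pM => //; first exact: ltW (hd _ (ltn_ord i)).
exact: dnorm_le.
Qed.

Lemma i_ii : (exists x : X, x != 0) -> weakstar_diam2 X -> weakly_octahedral X.
Proof.
move=> [x0 nx0] h E [zs ->] xs hxs eps e0.
have [e1|elt1] := lerP 1 eps.
  exists (`|x0|^-1 *: x0); split.
    by rewrite normrZ normfV normr_id mulVf // normr_eq0.
  move=> x _; apply: le_trans (normr_ge0 _).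
  by rewrite mulr_le0_ge0 ?addr_ge0 //; lra.
have [n [e [f [hf he hx]]]] := repr zs.
pose K := 1 + \sum_(i < n) dnorm (f i).
have K1 : 1 <= K by rewrite /K lerDl; apply: sumr_ge0 => i _; exact: dnorm_ge0.
pose R0 := 2 / eps.
have R00 : 0 < R0 by rewrite divr_gt0.
have KR0 : 0 < 1 + K * R0 by have := mulr_gt0 (lt_le_trans ltr01 K1) R00; lra.
pose del := eps / (2 * (1 + K * R0)).
have del0 : 0 < del by rewrite divr_gt0 // mulr_gt0.
have delK : del * (1 + K * R0) = eps / 2 by rewrite /del; field; rewrite gt_eqF.
have del1 : del < 1.
  have h1 : 1 <= 1 + K * R0 by have := mulr_gt0 (lt_le_trans ltr01 K1) R00; lra.
  have := ler_wpM2l (ltW del0) h1; rewrite mulr1 delK; lra.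
have [hxs_d nxs] := hxs.
pose es := [seq e i | i <- iota 0 n].
pose U := [set g | is_dual g /\ forall x, x \in es -> `|g x - xs x| < del].
have hU : weakstar_open U.
  split; first by move=> g [].
  move=> g [hg hgx].
  have [r [r0 hr]] := finite_margin hgx.
  exists es, r; split => // k [hk hkx]; split => // x xin.
  have := hr _ xin; have := hkx _ xin.
  have : `|k x - xs x| <= `|k x - g x| + `|g x - xs x|.
    by apply: le_trans (ler_normD _ _); rewrite addrA subrK.
  lra.
have hUB : (U `&` @dual_ball _ X) !=set0.
  by exists xs; split => //; split => // x _; rewrite subrr normr0.
have := h U hU hUB; rewrite /ddiam => hsup.
have [_ [g1 [[hg1 hg1x] [dg1 ng1]] [g2 [[hg2 hg2x] [dg2 ng2]] <-]] hgt] :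
    exists2 s, [set dnorm (f \- g) | f in U `&` @dual_ball _ X & g in U `&` @dual_ball _ X] s & 2 - del < s.
  apply: sup_gt; last by rewrite hsup; lra.
  by case: hUB => g hg; exists (dnorm (g \- g)), g => //; exists g.
have hd12 := dual_sub dg1 dg2.
have [hl12 _] := hd12.
have [v [nv hv]] := dnorm_gt hgt.
have [v' [nv' hv']] : exists v', `|v'| <= 1 /\ 2 - del < (g1 \- g2) v'.
  have [hs|hs] := lerP 0 ((g1 \- g2) v).
    by exists v; split => //; rewrite -(ger0_norm hs).
  exists (- v); split; first by rewrite normrN.
  by rewrite (linN hl12) -(ltr0_norm hs).
have v'0 : v' != 0.
  by apply/eqP => v'0; move: hv'; rewrite v'0 (lin0 hl12); lra.
have nv'0 : 0 < `|v'| by rewrite normr_gt0.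
pose y := `|v'|^-1 *: v'.
have ny : `|y| = 1 by rewrite normrZ normfV normr_id mulVf // gt_eqF.
have hy : 2 - del < g1 y - g2 y.
  have -> : g1 y - g2 y = (g1 \- g2) y by [].
  rewrite /y (linZ hl12); refine (lt_le_trans hv' _).
  apply: ler_peMl; first by lra.
  by rewrite invf_ge1.
have g1y : g1 y <= 1.
  by apply: le_trans (ler_norm _) _; apply: le_trans (dnorm_le y dg1) _; rewrite ny mulr1.
have g2y : - g2 y <= 1.
  apply: le_trans (ler_norm _) _; rewrite normrN.
  by apply: le_trans (dnorm_le y dg2) _; rewrite ny mulr1.
exists y; split => // x hxE; rewrite ny.
have ex := hx _ hxE.
have esin : forall i, (i < n)%N -> e i \in es.
  by move=> i hi; apply: map_f; rewrite mem_iota add0n.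
have a1 := approx_bound hf dg1 hxs_d (ltW del0) (fun i hi => hg1x _ (esin i hi)) ex.
have a2 := approx_bound hf dg2 hxs_d (ltW del0) (fun i hi => hg2x _ (esin i hi)) ex.
set S := \sum_(i < n) dnorm (f i) in a1 a2.
have SK : S <= K by rewrite /K /S; lra.
have S0 : 0 <= S by apply: sumr_ge0 => i _; exact: dnorm_ge0.
have F1 : g1 x + g1 y <= `|x + y|.
  rewrite -(linD (dual_lin dg1)); apply: le_trans (ler_norm _) _.
  by apply: le_trans (dnorm_le _ dg1) _; rewrite ler_piMl.
have F2 : - g2 x - g2 y <= `|x + y|.
  rewrite -opprD -(linD (dual_lin dg2)); apply: le_trans (ler_norm _) _.
  by rewrite normrN; apply: le_trans (dnorm_le _ dg2) _; rewrite ler_piMl.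
have F8 : `|x| - 1 <= `|x + y|.
  have : `|x| <= `|x + y| + `|y| by have := ler_normB (x + y) y; rewrite addrK.
  by rewrite (_ : `|y| = 1) //; lra.
have ax : `|xs x| <= `|x|.
  by have := dnorm_le x hxs_d; have := ler_wpM2r (normr_ge0 x) nxs; lra.
move: a1 a2; rewrite !ler_norml => /andP[a1l a1r] /andP[a2l a2r].
have [rR|rR] := lerP `|x| R0.
  have T : del * S * `|x| <= del * K * R0.
    apply: ler_pM => //; first by rewrite mulr_ge0 // ltW.
    by apply: ler_wpM2l => //; exact: ltW.
  have dd : del + del * K * R0 = eps / 2 by rewrite -delK; ring.
  have ea : 0 <= eps * `|xs x| by rewrite mulr_ge0 // ltW.
  have [s0|s0] := lerP 0 (xs x).
    by rewrite ger0_norm // in ea *; lra.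
  by rewrite ltr0_norm // in ea *; lra.
have eR : eps * R0 = 2 by rewrite /R0; field; rewrite gt_eqF.
have h2 : 2 < eps * `|x| by rewrite -eR ltr_pM2l.
have h3 : (1 - eps) * (`|xs x| + 1) <= (1 - eps) * (`|x| + 1).
  by apply: ler_wpM2l; [lra|lra].
lra.
Qed.

End Dirs3.

End Helpers.
Import Helpers.

Theorem theorem3p3 (R : realType) (X : completeNormedModType R)
  (nontriv : exists x : X, x != 0) :
  [<-> weakstar_diam2 X; weakly_octahedral X; cond_iii X; cond_iii' X].
Proof.
tfae.
- exact: i_ii.
- exact: ii_iii.
- exact: iii_iii'.
- exact: iii'_i.
Qed.
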